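(* Any algorithm that maintains a uniformly random sample of the active elements within a timestamp-based sliding window has memory usage $\Omega(\log n)$, where $n$ is the number of active elements: there exist streams for which, with positive probability, at some time the algorithm must store $\Omega(\log n)$ distinct elements.
   Context: A stream $p_0,p_1,\dots$ has non-decreasing timestamps $T(p_i)$ (several elements may share a timestamp); with fixed parameter $t_0$, element $p$ is active at time $t$ if $t-T(p)<t_0$, otherwise expired. The sample at each time must be uniform over the active elements at that time. *)

(* Defs.v *)
From HB Require Import structures.
From mathcomp Require Import all_boot all_order all_algebra.
From mathcomp Require Import all_classical all_reals all_analysis.
Set Implicit Arguments. Unset Strict Implicit. Unset Printing Implicit Defensive.
Import Order.TTheory GRing.Theory Num.Theory.
Local Open Scope classical_set_scope.

(* A stream p_0, p_1, ..., p_(m-1) is represented by the sequence of its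
   timestamps T (element p_i is identified with its index i, timestamp
   nth 0 T i). *)

Definition stamp (T : seq nat) (i : nat) : nat := nth 0 T i.

Definition is_active (T : seq nat) (t0 t i : nat) : bool :=
  [&& i < size T, stamp T i <= t & t - stamp T i < t0].

Definition active_set (T : seq nat) (t0 t : nat) : seq nat :=
  [seq i <- iota 0 (size T) | is_active T t0 t i].

Definition arrivals (T : seq nat) (t : nat) : seq nat :=
  [seq i <- iota 0 (size T) | stamp T i == t].

(* A (randomized) sliding-window sampling algorithm run on stream T with
   window t0, with randomness from the probability space (Om, P):
   - M t w : the elements stored in memory at time t (after processing all
     elements with timestamp <= t);
   - s t w : the sample output at time t.
   Constraints:
   - memory: an element can only be in memory at time t if it was in memory
     at time t-1 or arrives at time t (the algorithm cannot recover dropped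
     elements);
   - the output sample is a stored element;
   - the sample is uniform over the active elements at every time t at which
     some element is active;
   - measurability of the events used. *)
Definition window_sampler (R : realType) (d : measure_display)
  (Om : measurableType d) (P : probability Om R) (T : seq nat) (t0 : nat)
  (M : nat -> Om -> seq nat) (s : nat -> Om -> nat) : Prop :=
  [/\ (forall t (A : seq nat), measurable [set w | M t w = A]) /\
      (forall t i, measurable [set w | s t w = i]),
      (forall w i, i \in M 0 w -> i \in arrivals T 0),
      (forall t w i, i \in M t.+1 w -> (i \in M t w) || (i \in arrivals T t.+1)),
      (forall t w, active_set T t0 t != [::] -> s t w \in M t w) &
      (forall t i, is_active T t0 t i ->
         P [set w | s t w = i] = (((size (active_set T t0 t))%:R)^-1)%R%:E)].

Definition mem_usage (M : nat -> seq nat) (t : nat) : nat := size (undup (M t)).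

(* Main.v *)
Require Import Defs.
From HB Require Import structures.
From mathcomp Require Import all_boot all_order all_algebra.
From mathcomp Require Import all_classical all_reals all_analysis.
From mathcomp Require Import measurable_realfun.
Import Order.TTheory GRing.Theory Num.Theory.
Local Open Scope classical_set_scope.
Local Open Scope ring_scope.

Lemma ln_le_sub1 (R : realType) (x : R) : 0 < x -> ln x <= x - 1.
Proof.
move=> x0; have := expR_ge1Dx (ln x); rewrite lnK ?posrE //.
by rewrite lerBrDl.
Qed.

Lemma harm_ln (R : realType) (n : nat) :
  ln ((n.+1)%:R : R) <= \sum_(j < n) ((j.+1)%:R)^-1.
Proof.
elim: n => [|n IH]; first by rewrite big_ord0 ln1.
rewrite big_ord_recr /=.
have -> : ((n.+2)%:R : R) = (n.+1)%:R * ((n.+2)%:R / (n.+1)%:R).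
  by rewrite mulrC divfK // pnatr_eq0.
rewrite lnM ?posrE ?divr_gt0 ?ltr0n //.
apply: lerD => //.
have h := @ln_le_sub1 R ((n.+2)%:R / (n.+1)%:R).
have {}h := h (divr_gt0 (ltr0Sn _ _) (ltr0Sn _ _)).
apply: (le_trans h).
rewrite -[X in _ - X <= _](divff (_ : (n.+1)%:R != 0 :> R)) ?pnatr_eq0 //.
by rewrite -mulrBl -natrB // subSnn mul1r.
Qed.
From mathcomp Require Import zify.
Local Open Scope nat_scope.

Lemma stamp_iota n i : i < n -> stamp (iota 0 n) i = i.
Proof. by move=> h; rewrite /stamp nth_iota. Qed.

Lemma active_iota n j : j < n ->
  active_set (iota 0 n) n (n.-1 + j) = iota j (n - j).
Proof.
move=> jn; rewrite /active_set size_iota.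
have E : iota 0 n = iota 0 j ++ iota j (n - j) by rewrite -iotaD subnKC // ltnW.
rewrite {2}E filter_cat.
rewrite (@eq_in_filter _ _ pred0); last first.
  move=> i; rewrite mem_iota => /andP [_ hi] /=.
  rewrite /is_active stamp_iota; last by lia.
  apply/negbTE; apply/negP => /and3P [h1 h2 h3]; lia.
rewrite filter_pred0 cat0s.
rewrite (@eq_in_filter _ _ predT) ?filter_predT //.
move=> i; rewrite mem_iota => /andP [h0 hi] /=.
rewrite /is_active stamp_iota; last by lia.
rewrite -subn1 size_iota; apply/and3P; split; lia.
Qed.

Lemma arrivals_iota n t : n <= t -> arrivals (iota 0 n) t = [::].
Proof.
move=> nt; rewrite /arrivals size_iota.
rewrite (@eq_in_filter _ _ pred0) ?filter_pred0 //.
move=> i; rewrite mem_iota => /andP [_ hi] /=.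
rewrite stamp_iota; last by lia.
apply/negbTE/eqP; lia.
Qed.

Lemma sum_count (r : seq nat) (a : pred nat) : \sum_(j <- r) (a j : nat) = count a r.
Proof. by elim: r => [|x r IH]; rewrite ?big_nil ?big_cons //= IH. Qed.

Lemma sum_mem_le (m : nat) (A : seq nat) :
  \sum_(j < m) ((nat_of_ord j \in A) : nat) <= size (undup A).
Proof.
rewrite -(big_mkord xpredT (fun j => ((j \in A) : nat))) /index_iota subn0 sum_count.
rewrite -size_filter; apply: uniq_leq_size; first by rewrite filter_uniq ?iota_uniq.
by move=> x; rewrite mem_filter mem_undup => /andP [].
Qed.

Lemma harm_gt (R : realType) (m : nat) :
  (ln ((m.+1)%:R : R) < \sum_(j < m.+1) (((m.+1 - j)%:R)^-1))%R.
Proof.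
rewrite (reindex_inj rev_ord_inj) /=.
have -> : (\sum_(j < m.+1) ((m.+1 - rev_ord j)%:R : R)^-1 = \sum_(j < m.+1) ((j.+1)%:R)^-1)%R.
  by apply: eq_bigr => j _; rewrite /= subKn // ltn_ord.
rewrite big_ord_recr /=.
apply: (le_lt_trans (harm_ln R m)).
by rewrite ltrDl invr_gt0 ltr0n.
Qed.

Theorem lemma4p7 (R : realType) :
  exists c : R, (0 < c)%R /\ exists n0 : nat, forall n : nat, (n0 <= n)%N ->
  exists (T : seq nat) (t0 t : nat),
    sorted leq T /\ size (active_set T t0 t) = n /\
    forall (d : measure_display) (Om : measurableType d) (P : probability Om R)
      (M : nat -> Om -> seq nat) (s : nat -> Om -> nat),
      window_sampler P T t0 M s ->
      (0 < P [set w | (c * ln (n%:R) <= (mem_usage (M ^~ w) t)%:R)%R])%E.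
Proof.
exists 1%R; split; first exact: ltr01.
exists 1 => -[//|m] _.
exists (iota 0 m.+1), m.+1, m.
have act j : j <= m -> active_set (iota 0 m.+1) m.+1 (m + j) = iota j (m.+1 - j).
  by move=> jm; apply: (@active_iota m.+1 j).
split; first exact: iota_sorted.
split; first by have := act 0 (leq0n _); rewrite addn0 => ->; rewrite size_iota.
move=> d Om P M s [[mM ms] hM0 hMS hsM hunif].
have mono k w i : i \in M (m + k) w -> i \in M m w.
  elim: k w i => [|k IH] w i; first by rewrite addn0.
  rewrite addnS => /hMS; rewrite arrivals_iota ?in_nil ?orbF; [exact: IH | by rewrite ltnS leq_addr].
have inM j w : j <= m -> s (m + j) w = j -> j \in M m w.
  move=> jm sj; apply: (mono j); rewrite -{1}sj; apply: hsM.
  rewrite act //; apply/eqP => /(f_equal size); rewrite size_iota /=; lia.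
have hB j : j <= m -> P [set w | s (m + j) w = j] = (((m.+1 - j)%:R)^-1)%R%:E.
  move=> jm; rewrite hunif ?act ?size_iota //.
  rewrite /is_active size_iota stamp_iota; last by lia.
  apply/and3P; split; lia.
set G := [set w | _].
have mG : measurable G.
  pose F := fun i : nat => match @unpickle (seq nat) i with
      | Some A => if (1 * ln ((m.+1)%:R : R) <= (size (undup A))%:R)%R
                  then [set w | M m w = A] else set0
      | None => set0 end.
  have FM : forall i, measurable (F i).
    move=> i; rewrite /F.
    case: (unpickle i) => [A|]; last exact: measurable0.
    by case: ifP => _ //; exact: measurable0.
  have -> : G = \bigcup_i F i.
    apply/seteqP; split.
    - move=> w Gw; exists (pickle (M m w)) => //; rewrite /F pickleK /=.
      by rewrite ifT.
    - move=> w [i _]; rewrite /F; case: (unpickle i) => [A|] //; case: ifP => // hA /= eqA.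
      by rewrite /G /= /mem_usage eqA.
  exact: bigcupT_measurable.
rewrite lt0e measure_ge0 andbT.
apply/negP => /eqP PG0.
pose B j := [set w | s (m + j) w = j].
pose C j := B j `&` ~` G.
have mB j : measurable (B j) := ms _ _.
have mC j : measurable (C j).
  by apply: measurableI; [exact: mB | exact: measurableC].
have PC j : j <= m -> P (C j) = (((m.+1 - j)%:R)^-1)%R%:E.
  move=> jm; rewrite -hB //.
  have h1 := measureDI P (mB j) mG.
  have h0 : P (B j `&` G) = 0%E.
    apply/eqP; rewrite eq_le measure_ge0 andbT -PG0 le_measure // ?inE //.
    exact: measurableI.
  have h2 : (P (B j `\` G) + P (B j `&` G) = P (C j))%E.
    by rewrite h0 adde0 setDE.
  rewrite -h2; exact: (esym h1).
pose f := fun w : Om => (\sum_(j < m.+1) (\1_(C j) w : R)%:E)%E.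
have I1 : (\int[P]_(w in setT) f w = \sum_(j < m.+1) P (C j))%E.
  rewrite /f ge0_integral_sum //.
  - by apply: eq_bigr => j _; rewrite integral_indic // setIT.
  - by move=> j; apply/measurable_EFinP; exact: measurable_indic.
have I2 : (\int[P]_(w in setT) f w <= (ln (m.+1)%:R)%:E)%E.
  rewrite -[X in (_ <= X)%E]mule1 -(probability_setT P) -integral_cst //.
  apply: ge0_le_integral => //.
  - by move=> x _; apply: sume_ge0 => j _; rewrite lee_fin indicE ler0n.
  - by apply: emeasurable_sum => j; apply/measurable_EFinP; exact: measurable_indic.
  move=> w _; rewrite /f sumEFin lee_fin /=.
  have [Gw|Gw] := pselect (G w).
    rewrite big1 ?ln_ge0 ?ler1n // => j _.
    by rewrite indicE memNset // => -[].
  have Gw' : ((mem_usage (M^~ w) m)%:R < ln (m.+1)%:R :> R)%R.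
    rewrite ltNge; apply/negP => h; apply: Gw; rewrite /G /= mul1r; exact: h.
  apply: le_trans (ltW Gw').
  under eq_bigr => j _ do rewrite indicE.
  rewrite -natr_sum ler_nat.
  apply: leq_trans (sum_mem_le m.+1 (M m w)).
  apply: leq_sum => j _.
  case: (boolP (w \in C j)) => //; rewrite inE => -[Bj _].
  by rewrite (inM j w) // -ltnS.
move: I2; rewrite I1.
rewrite (eq_bigr (fun j : 'I_m.+1 => (((m.+1 - j)%:R)^-1)%R%:E)); last first.
  by move=> j _; rewrite PC // -ltnS.
rewrite sumEFin lee_fin.
by rewrite leNgt harm_gt.
Qed.
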